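(* Let $f(x)=\frac1n\sum_{i=1}^n f_i(x)$ with $f_i:\mathbb{R}^d\to\mathbb{R}$, where each $f_i$ is $L$-smooth ($\|\nabla f_i(x)-\nabla f_i(y)\|\le L\|x-y\|$ for all $x,y$) and $f^*=\inf_{x\in\mathbb{R}^d} f(x)>-\infty$. Run No Full Grad SVRG (described in the context) with stepsize $\gamma\le \frac{1}{20Ln}$. Then, to reach $\varepsilon$-accuracy, where $\varepsilon^2=\frac1S\sum_{s=1}^S\|\nabla f(\omega_s)\|^2$, the method needs $\mathcal{O}\left(\frac{nL}{\varepsilon^2}\right)$ iterations and oracle calls.
   Context: No Full Grad SVRG: input $x_0^0\in\mathbb{R}^d$, $\omega_0=x_0^0$, $\tilde v_0^0=0$, $v_0=0$, stepsize $\gamma>0$. For epochs $s=0,1,\dots,S$: choose a permutation $\pi_s^0,\dots,\pi_s^{n-1}$ of the $n$ component indices (by any shuffling rule, e.g. reshuffling every epoch, shuffling once, or a fixed cyclic order); for $t=0,\dots,n-1$ set $\tilde v_s^{t+1}=\frac{t}{t+1}\tilde v_s^t+\frac1{t+1}\nabla f_{\pi_s^t}(x_s^t)$, $v_s^t=\nabla f_{\pi_s^t}(x_s^t)-\nabla f_{\pi_s^t}(\omega_s)+v_s$, $x_s^{t+1}=x_s^t-\gamma v_s^t$; then set $x_{s+1}^0=x_s^n$, $\omega_{s+1}=x_s^n$, $\tilde v_{s+1}^0=0$, $v_{s+1}=\tilde v_s^n$. An oracle call is one evaluation of a single component gradient $\nabla f_i$; an iteration is one inner step (index $t$). The $\mathcal{O}(\cdot)$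 hides absolute constants and the dependence on the initial gap. *)

(* Defs.v *)
From HB Require Import structures.
From mathcomp Require Import all_boot all_order all_algebra.
From mathcomp Require Import all_classical all_reals all_analysis.
Set Implicit Arguments. Unset Strict Implicit. Unset Printing Implicit Defensive.
Import Order.TTheory GRing.Theory Num.Theory.
Import numFieldNormedType.Exports.
Local Open Scope ring_scope.

Definition dotv (R : realType) (d : nat) (u v : 'rV[R]_d) : R :=
  \sum_(i < d) u ord0 i * v ord0 i.
Definition enorm (R : realType) (d : nat) (u : 'rV[R]_d) : R :=
  Num.sqrt (dotv u u).

Definition is_gradient (R : realType) (d : nat)
    (f : 'rV[R]_d -> R) (g : 'rV[R]_d -> 'rV[R]_d) : Prop :=
  forall x, differentiable f x /\ forall h, 'd f x h = dotv (g x) h.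

Definition favg (R : realType) (d n : nat) (f : nat -> 'rV[R]_d -> R)
    (x : 'rV[R]_d) : R := n%:R^-1 * \sum_(i < n) f i x.
Definition gavg (R : realType) (d n : nat) (g : nat -> 'rV[R]_d -> 'rV[R]_d)
    (x : 'rV[R]_d) : 'rV[R]_d := n%:R^-1 *: \sum_(i < n) g i x.

(* Inner loop of epoch s of No Full Grad SVRG.
   g i = grad f_i, gamma = stepsize, pi s t = pi_s^t.
   Given x_s^0, omega_s, v_s, returns (x_s^t, tilde v_s^t). *)
Fixpoint nfg_inner (R : realType) (d : nat) (g : nat -> 'rV[R]_d -> 'rV[R]_d)
    (gamma : R) (pi : nat -> nat -> nat) (s : nat)
    (x0 om v : 'rV[R]_d) (t : nat) : 'rV[R]_d * 'rV[R]_d :=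
  match t with
  | 0%N => (x0, 0)
  | t'.+1 =>
      let: (x, vt) := nfg_inner g gamma pi s x0 om v t' in
      let i := pi s t' in
      (x - gamma *: (g i x - g i om + v),
       (t'%:R / (t'.+1)%:R) *: vt + (t'.+1)%:R^-1 *: g i x)
  end.

(* Outer state at the start of epoch s: (omega_s, v_s); note x_s^0 = omega_s
   for every s (omega_0 = x_0^0 and x_{s+1}^0 = omega_{s+1} = x_s^n). *)
Fixpoint nfg_state (R : realType) (d n : nat) (g : nat -> 'rV[R]_d -> 'rV[R]_d)
    (gamma : R) (pi : nat -> nat -> nat) (x0 : 'rV[R]_d) (s : nat)
    : 'rV[R]_d * 'rV[R]_d :=
  match s with
  | 0%N => (x0, 0)
  | s'.+1 =>
      let: (om, v) := nfg_state n g gamma pi x0 s' in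
      nfg_inner g gamma pi s' om om v n
  end.

Definition nfg_omega (R : realType) (d n : nat) (g : nat -> 'rV[R]_d -> 'rV[R]_d)
    (gamma : R) (pi : nat -> nat -> nat) (x0 : 'rV[R]_d) (s : nat) : 'rV[R]_d :=
  (nfg_state n g gamma pi x0 s).1.

(* Main.v *)
Require Import Defs.
From HB Require Import structures.
From mathcomp Require Import all_boot all_order all_algebra.
From mathcomp Require Import all_classical all_reals all_analysis.
From mathcomp Require Import ring lra.
Set Implicit Arguments. Unset Strict Implicit.
Import Order.TTheory GRing.Theory Num.Theory.
Import numFieldNormedType.Exports.
Local Open Scope ring_scope.
Local Open Scope classical_set_scope.
Section Dot.
Variables (R : realType) (d : nat).
Implicit Types (u v w : 'rV[R]_d).

Lemma dotvC u v : dotv u v = dotv v u.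
Proof. by apply: eq_bigr => i _; rewrite mulrC. Qed.
Lemma dotvDl u v w : dotv (u + v) w = dotv u w + dotv v w.
Proof. by rewrite /dotv -big_split; apply: eq_bigr => i _; rewrite mxE mulrDl. Qed.
Lemma dotvZl (a : R) u v : dotv (a *: u) v = a * dotv u v.
Proof. by rewrite /dotv mulr_sumr; apply: eq_bigr => i _; rewrite mxE mulrA. Qed.
Lemma dotvNl u v : dotv (- u) v = - dotv u v.
Proof. by rewrite -scaleN1r dotvZl mulN1r. Qed.
Lemma dotvBl u v w : dotv (u - v) w = dotv u w - dotv v w.
Proof. by rewrite dotvDl dotvNl. Qed.
Lemma dotvDr u v w : dotv w (u + v) = dotv w u + dotv w v.
Proof. by rewrite dotvC dotvDl !(dotvC w). Qed.
Lemma dotvZr (a : R) u v : dotv v (a *: u) = a * dotv v u.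
Proof. by rewrite dotvC dotvZl dotvC. Qed.
Lemma dotvNr u v : dotv v (- u) = - dotv v u.
Proof. by rewrite dotvC dotvNl dotvC. Qed.
Lemma dotvBr u v w : dotv w (u - v) = dotv w u - dotv w v.
Proof. by rewrite dotvDr dotvNr. Qed.
Lemma dotv0l v : dotv 0 v = 0.
Proof. by rewrite /dotv big1 // => i _; rewrite mxE mul0r. Qed.
Lemma dotv_suml (I : Type) (r : seq I) (P : pred I) (F : I -> 'rV[R]_d) v :
  dotv (\sum_(i <- r | P i) F i) v = \sum_(i <- r | P i) dotv (F i) v.
Proof.
elim/big_rec2: _ => [|i y1 y2 _ <-]; first exact: dotv0l.
by rewrite dotvDl.
Qed.
Lemma dotv_ge0 u : 0 <= dotv u u.
Proof. by apply: sumr_ge0 => i _; rewrite -expr2 sqr_ge0. Qed.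

Lemma enorm_ge0 u : 0 <= enorm u.
Proof. exact: sqrtr_ge0. Qed.
Lemma enorm_sq u : enorm u ^+ 2 = dotv u u.
Proof. by rewrite sqr_sqrtr // dotv_ge0. Qed.

Lemma dotv_eq0 u : dotv u u = 0 -> u = 0.
Proof.
move=> /eqP; rewrite psumr_eq0 => [/allP H|i _]; last by rewrite -expr2 sqr_ge0.
apply/rowP => i; rewrite mxE.
by have /(_ (mem_index_enum i))/implyP/(_ isT) := H i; rewrite mulf_eq0 orbb => /eqP.
Qed.

Lemma cauchy_schwarz u v : dotv u v <= enorm u * enorm v.
Proof.
have [u0|] := eqVneq (dotv u u) 0.
  by rewrite (dotv_eq0 u0) dotv0l mulr_ge0 // enorm_ge0.
move=> uneq0; have upos : 0 < dotv u u by rewrite lt0r uneq0 dotv_ge0.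
set t := dotv u v / dotv u u.
have := dotv_ge0 (t *: u - v).
rewrite !(dotvBl, dotvBr, dotvZl, dotvZr) (dotvC v u) => H.
have H2 : dotv u v ^+ 2 <= dotv u u * dotv v v.
  have E : t * (t * dotv u u) = dotv u v ^+2 / dotv u u.
    by rewrite /t; field; rewrite gt_eqF.
  have E2 : t * dotv u v = dotv u v ^+2 / dotv u u.
    by rewrite /t; field; rewrite gt_eqF.
  rewrite mulrBr E E2 in H.
  have E3 : dotv u v ^+2 = (dotv u v ^+2 / dotv u u) * dotv u u.
    by rewrite divfK // gt_eqF.
  rewrite E3 mulrC ler_pM2l //; lra.
have : dotv u v ^+ 2 <= (enorm u * enorm v) ^+ 2 by rewrite exprMn !enorm_sq.
have : 0 <= enorm u * enorm v by rewrite mulr_ge0 // enorm_ge0.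
set P := enorm u * enorm v; set X := dotv u v; nra.
Qed.

Lemma enormD u v : enorm (u + v) <= enorm u + enorm v.
Proof.
have : enorm (u + v) ^+ 2 <= (enorm u + enorm v) ^+ 2.
  rewrite sqrrD !enorm_sq dotvDl !dotvDr (dotvC v u).
  have := cauchy_schwarz u v; lra.
have := enorm_ge0 u; have := enorm_ge0 v; have := enorm_ge0 (u + v).
set a := enorm u; set b := enorm v; set c := enorm (u + v); nra.
Qed.

Lemma enormZ (a : R) u : enorm (a *: u) = `|a| * enorm u.
Proof.
by rewrite /enorm dotvZl dotvZr mulrA -expr2 sqrtrM ?sqr_ge0 // sqrtr_sqr.
Qed.
Lemma enormN u : enorm (- u) = enorm u.
Proof. by rewrite -scaleN1r enormZ normrN normr1 mul1r. Qed.
Lemma enormB u v : enorm (u - v) <= enorm u + enorm v.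
Proof. by rewrite -(enormN v) enormD. Qed.
Lemma enorm_sum (I : Type) (r : seq I) (P : pred I) (F : I -> 'rV[R]_d) :
  enorm (\sum_(i <- r | P i) F i) <= \sum_(i <- r | P i) enorm (F i).
Proof.
elim/big_rec2: _ => [|i y1 y2 _ H].
  by rewrite /enorm dotv0l sqrtr0.
by apply: le_trans (enormD _ _) _; rewrite lerD2l.
Qed.
Lemma dotv_le u v : dotv u v <= enorm u * enorm v.
Proof. exact: cauchy_schwarz. Qed.
Lemma dotv_ge u v : - (enorm u * enorm v) <= dotv u v.
Proof. by rewrite lerNl -dotvNl -(enormN u) cauchy_schwarz. Qed.
End Dot.

Lemma phi_derive (R : realType) (d : nat) (f : 'rV[R]_d -> R) (g : 'rV[R]_d -> 'rV[R]_d)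
  (x h : 'rV[R]_d) (t : R) : is_gradient f g ->
  is_derive t 1 (fun s : R => f (s *: h + x)) (dotv (g (t *: h + x)) h).
Proof.
move=> Hg.
have E : (fun s : R => s^-1 *: (((fun s0 : R => f (s0 *: h + x)) \o shift t) (s *: 1) - f (t *: h + x)))
   = (fun s : R => s^-1 *: ((f \o shift (t *: h + x)) (s *: h) - f (t *: h + x))).
  apply/funext => s /=; congr (_ *: (f _ - _)).
  by rewrite /shift /= [s *: 1]mulr1 scalerDl addrA.
have [Df Dg] := Hg (t *: h + x).
have dv := diff_derivable (v:=h) Df.
apply: DeriveDef.
  by rewrite /derivable E.
by rewrite /derive E -/(derive f _ h) deriveE // Dg.
Qed.

Lemma descent1 (R : realType) (d : nat) (f : 'rV[R]_d -> R) (g : 'rV[R]_d -> 'rV[R]_d)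
  (L : R) : 0 <= L -> is_gradient f g ->
  (forall x y, enorm (g x - g y) <= L * enorm (x - y)) ->
  forall x y, f y <= f x + dotv (g x) (y - x) + L * enorm (y - x) ^+ 2.
Proof.
move=> L0 Hg HL x y; set h := y - x.
have D : forall t : R, is_derive t 1 (fun s : R => f (s *: h + x)) (dotv (g (t *: h + x)) h) := fun t => phi_derive x h t Hg.
have [c /andP[c0 c1] E] : exists2 c, c \in `]0, 1[%R &
   (fun s : R => f (s *: h + x)) 1 - (fun s : R => f (s *: h + x)) 0
     = dotv (g (c *: h + x)) h * (1 - 0).
  apply: (@MVT _ (fun s : R => f (s *: h + x)) (fun r : R => dotv (g (r *: h + x)) h) 0 1).
  - by [].
  apply: derivable_within_continuous => z _.
  exact: (@ex_derive _ _ _ _ _ _ _ (D z)).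
move: E => /=; rewrite scale1r scale0r add0r subr0 mulr1 /h addrNK => E.
have -> : f y = f x + dotv (g (c *: (y - x) + x)) (y - x) by rewrite -E; ring.
rewrite -addrA lerD2l.
have -> : dotv (g (c *: (y - x) + x)) (y - x)
   = dotv (g x) (y - x) + dotv (g (c *: (y - x) + x) - g x) (y - x).
  by rewrite dotvBl; ring.
rewrite lerD2l.
apply: le_trans (dotv_le _ _) _.
have H1 := HL (c *: (y - x) + x) x; rewrite addrK enormZ in H1.
have c0' : 0 < c by [].
have c1' : c < 1 by [].
rewrite ger0_norm in H1; last exact: ltW.
have := enorm_ge0 (y - x); have := enorm_ge0 (g (c *: (y - x) + x) - g x).
set a := enorm (y - x); set b := enorm (g (c *: (y - x) + x) - g x) => b0 a0.
have h1 : b * a <= (L * (c * a)) * a by rewrite ler_wpM2r.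
have h2 : 0 <= (1 - c) * (L * (a * a)) by apply: mulr_ge0; [rewrite subr_ge0 ltW | apply: mulr_ge0 => //; apply: mulr_ge0].
rewrite expr2; nra.
Qed.

Lemma descentF (R : realType) (d n : nat) (f : nat -> 'rV[R]_d -> R)
  (g : nat -> 'rV[R]_d -> 'rV[R]_d) (L : R) : (0 < n)%N -> 0 <= L ->
  (forall i, (i < n)%N -> is_gradient (f i) (g i)) ->
  (forall i, (i < n)%N -> forall x y, enorm (g i x - g i y) <= L * enorm (x - y)) ->
  forall x y, favg n f y <= favg n f x + dotv (gavg n g x) (y - x) + L * enorm (y - x) ^+ 2.
Proof.
move=> n0 L0 Hg HL x y; rewrite /favg /gavg dotvZl dotv_suml.
have nn0 : (n%:R : R) != 0 by rewrite pnatr_eq0 -lt0n.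
have npos : (0 : R) < n%:R by rewrite ltr0n.
have -> : n%:R^-1 * \sum_(i < n) f i x + n%:R^-1 * \sum_(i < n) dotv (g i x) (y - x)
   + L * enorm (y - x) ^+ 2 = n%:R^-1 * (\sum_(i < n) (f i x + dotv (g i x) (y - x)
   + L * enorm (y - x) ^+ 2)).
  by rewrite !big_split /= sumr_const card_ord -mulr_natr; field.
apply: ler_wpM2l; first by rewrite invr_ge0 ltW.
apply: ler_sum => i _; apply: descent1 => //; [exact: Hg | exact: HL].
Qed.

Lemma lipG (R : realType) (d n : nat) (g : nat -> 'rV[R]_d -> 'rV[R]_d) (L : R) :
  (0 < n)%N ->
  (forall i, (i < n)%N -> forall x y, enorm (g i x - g i y) <= L * enorm (x - y)) ->
  forall x y, enorm (gavg n g x - gavg n g y) <= L * enorm (x - y).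
Proof.
move=> n0 HL x y; rewrite /gavg -scalerBr -sumrB enormZ.
have npos : (0 : R) < n%:R by rewrite ltr0n.
rewrite ger0_norm; last by rewrite invr_ge0 ltW.
have ni : 0 <= (n%:R : R)^-1 by rewrite invr_ge0 ltW.
have H2 : \sum_(i < n) enorm (g i x - g i y) <= \sum_(i < n) (L * enorm (x - y)) by apply: ler_sum => i _; exact: HL.
apply: le_trans (ler_wpM2l ni (enorm_sum _ _ _)) _.
apply: le_trans (ler_wpM2l ni H2) _.
rewrite sumr_const card_ord -[L * _ *+ n]mulr_natr.
have nz : (n%:R : R) != 0 by rewrite gt_eqF.
rewrite (_ : (n%:R : R)^-1 * (L * enorm (x - y) * n%:R) = L * enorm (x - y)) //; field => //.
Qed.

Section Inner.
Variables (R : realType) (d : nat) (g : nat -> 'rV[R]_d -> 'rV[R]_d) (gamma : R)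
  (pi : nat -> nat -> nat) (s : nat) (om v : 'rV[R]_d).

Definition xin t := (nfg_inner g gamma pi s om om v t).1.

Lemma inner_closed t :
  xin t = om - gamma *: (\sum_(k < t) (g (pi s k) (xin k) - g (pi s k) om))
            - (gamma * t%:R) *: v /\
  t%:R *: (nfg_inner g gamma pi s om om v t).2 = \sum_(k < t) g (pi s k) (xin k).
Proof.
elim: t => [|t [IH1 IH2]].
  by rewrite /xin /= !big_ord0 scaler0 mulr0 scale0r !subr0 scale0r.
rewrite /xin /=.
case E : (nfg_inner g gamma pi s om om v t) => [x vt] /=.
have Ex : xin t = x by rewrite /xin E.
rewrite E /= in IH2; rewrite -Ex in IH2 *.
rewrite !big_ord_recr /=; split.
  rewrite {1}IH1 -natr1; set A := \sum_(i < t) _.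
  by apply/rowP => j; rewrite !mxE; ring.
rewrite -IH2.
have t1 : (t.+1%:R : R) != 0 by rewrite pnatr_eq0.
apply/rowP => j; rewrite !mxE.
rewrite -natr1 in t1 *; by field.
Qed.
End Inner.

Lemma sum_perm (V : zmodType) (n : nat) (p : nat -> nat) (F : nat -> V) :
  perm_eq [seq p t | t <- iota 0 n] (iota 0 n) ->
  \sum_(k < n) F (p k) = \sum_(i < n) F i.
Proof.
move=> Hp; rewrite -(big_mkord xpredT (fun k => F (p k))) -(big_mkord xpredT F) /index_iota subn0.
by rewrite -(big_map p xpredT F) (perm_big _ Hp).
Qed.

Lemma perm_lt (n : nat) (p : nat -> nat) k :
  perm_eq [seq p t | t <- iota 0 n] (iota 0 n) -> (k < n)%N -> (p k < n)%N.
Proof.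
move=> Hp kn.
have : p k \in [seq p t | t <- iota 0 n] by apply: map_f; rewrite mem_iota.
by rewrite (perm_mem Hp) mem_iota.
Qed.

Section Epoch.
Variables (R : realType) (d n : nat) (g : nat -> 'rV[R]_d -> 'rV[R]_d) (gamma L : R)
  (pi : nat -> nat -> nat) (s : nat) (om v : 'rV[R]_d).
Hypothesis n0 : (0 < n)%N.
Hypothesis L0 : 0 < L.
Hypothesis g0 : 0 <= gamma.
Hypothesis hgL : L * (gamma * n%:R) = 20^-1.
Hypothesis HL : forall i, (i < n)%N -> forall x y, enorm (g i x - g i y) <= L * enorm (x - y).
Hypothesis Hp : perm_eq [seq pi s t | t <- iota 0 n] (iota 0 n).

Let X t := xin g gamma pi s om v t.

Lemma inner_bound t : (t <= n)%N ->
  enorm (X t - om) <= 2 * (gamma * n%:R) * enorm v.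
Proof.
elim/ltn_ind: t => t IH tn.
have [E _] := inner_closed g gamma pi s om v t.
rewrite /X E.
have -> : om - gamma *: (\sum_(k < t) (g (pi s k) (xin g gamma pi s om v k) - g (pi s k) om))
   - (gamma * t%:R) *: v - om
   = - (gamma *: (\sum_(k < t) (g (pi s k) (xin g gamma pi s om v k) - g (pi s k) om)))
     - (gamma * t%:R) *: v.
  by apply/rowP => j; rewrite !mxE; ring.
apply: le_trans (enormB _ _) _.
rewrite enormN !enormZ !ger0_norm ?mulr_ge0 //.
have H1 : enorm (\sum_(k < t) (g (pi s k) (xin g gamma pi s om v k) - g (pi s k) om))
   <= \sum_(k < t) (L * (2 * (gamma * n%:R) * enorm v)).
  apply: le_trans (enorm_sum _ _ _) _.
  apply: ler_sum => k _.
  have kn : (k < n)%N by apply: leq_trans (ltn_ord k) tn.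
  apply: le_trans (HL (perm_lt Hp kn) _ _) _.
  apply: ler_wpM2l; first exact: ltW.
  by apply: IH => //; apply: ltnW.
rewrite sumr_const card_ord in H1.
have tn' : (t%:R : R) <= n%:R by rewrite ler_nat.
have t0 : (0 : R) <= t%:R by [].
have v0 := enorm_ge0 v.
set S := enorm _ in H1 *.
set e := enorm v in H1 v0 *.
have H2 : gamma * S <= gamma * (t%:R * (L * (2 * (gamma * n%:R) * e))).
  by apply: ler_wpM2l => //; rewrite mulr_natl.
have H3 : gamma * t%:R <= gamma * n%:R by apply: ler_wpM2l.
have H4 : gamma * (t%:R * (L * (2 * (gamma * n%:R) * e))) = (gamma * t%:R) * e / 10.
  have Lnz : L != 0 by rewrite gt_eqF.
  have gnE : gamma * n%:R = (20 * L)^-1.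
    by apply: (mulfI Lnz); rewrite hgL; field.
  by rewrite gnE; field.
have H5 : 0 <= gamma * t%:R by apply: mulr_ge0.
set gt := gamma * t%:R in H3 H4 H5 *.
set gn := gamma * n%:R in H2 H3 H4 *.
nra.
Qed.

Let V' := (nfg_inner g gamma pi s om om v n).2.
Let D := \sum_(k < n) (g (pi s k) (X k) - g (pi s k) om).

Lemma epoch_D : V' - gavg n g om = n%:R^-1 *: D.
Proof.
have [_ E2] := inner_closed g gamma pi s om v n.
have nz : (n%:R : R) != 0 by rewrite pnatr_eq0 -lt0n.
rewrite /D sumrB scalerBr -E2 scalerA mulVf // scale1r /gavg.
by rewrite (sum_perm (fun i => g i om) Hp).
Qed.

Lemma epoch_a : enorm (V' - gavg n g om) <= enorm v / 10.
Proof.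
rewrite epoch_D enormZ.
have npos : (0 : R) < n%:R by rewrite ltr0n.
have nz : (n%:R : R) != 0 by rewrite gt_eqF.
rewrite ger0_norm; last by rewrite invr_ge0 ltW.
have ni : 0 <= (n%:R : R)^-1 by rewrite invr_ge0 ltW.
have H2 : \sum_(k < n) enorm (g (pi s k) (X k) - g (pi s k) om)
   <= \sum_(k < n) (L * (2 * (gamma * n%:R) * enorm v)).
  apply: ler_sum => k _.
  apply: le_trans (HL (perm_lt Hp (ltn_ord k)) _ _) _.
  apply: ler_wpM2l; first exact: ltW.
  by apply: inner_bound; apply: ltnW.
apply: le_trans (ler_wpM2l ni (enorm_sum _ _ _)) _.
apply: le_trans (ler_wpM2l ni H2) _.
rewrite sumr_const card_ord -[L * _ *+ n]mulr_natr.
have Lnz : L != 0 by rewrite gt_eqF.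
have gnE : gamma * n%:R = (20 * L)^-1.
  by apply: (mulfI Lnz); rewrite hgL; field.
rewrite gnE le_eqVlt; apply/orP; left; apply/eqP; field; by rewrite Lnz nz.
Qed.

Lemma epoch_x : X n = om - (gamma * n%:R) *: ((V' - gavg n g om) + v).
Proof.
have [E1 _] := inner_closed g gamma pi s om v n.
have nz : (n%:R : R) != 0 by rewrite pnatr_eq0 -lt0n.
rewrite epoch_D /X E1 -/D.
apply/rowP => j; rewrite !mxE; field; exact: nz.
Qed.
End Epoch.
Lemma key_ineq (R : realType) (p e a b e' dF : R) :
  0 <= p -> 0 <= e -> 0 <= a -> 0 <= b -> 0 <= e' ->
  a <= (p + e) / 10 -> b <= a + e ->
  dF <= - p ^+ 2 + p * b + (p + b) ^+ 2 / 20 ->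
  e' <= a + (p + b) / 20 ->
  dF + 2 * e' ^+ 2 <= 2 * e ^+ 2 - p ^+ 2 / 2.
Proof.
move=> p0 e0 a0 b0 e'0 ha hb hF he.
have hB : b <= p / 10 + e * 11 / 10 by lra.
have hE : e' <= (p + e) * 31 / 200 by lra.
have h1 : p * b <= p * (p / 10 + e * 11 / 10) by apply: ler_wpM2l.
have h2 : (p + b) ^+ 2 <= (p + (p / 10 + e * 11 / 10)) ^+ 2.
  by rewrite ler_sqr ?nnegrE; lra.
have h3 : e' ^+ 2 <= ((p + e) * 31 / 200) ^+ 2.
  by rewrite ler_sqr ?nnegrE; lra.
have h4 : 0 <= (2 * p - 5 * e) ^+ 2 by apply: sqr_ge0.
have h5 : 0 <= p * e by apply: mulr_ge0.
nra.
Qed.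

Lemma key_ineq2 (R : realType) (eta p e a b e' dF : R) : 0 < eta ->
  0 <= p -> 0 <= e -> 0 <= a -> 0 <= b -> 0 <= e' ->
  a <= (p + e) / 10 -> b <= a + e ->
  dF <= eta * (- p ^+ 2 + p * b + (p + b) ^+ 2 / 20) ->
  e' <= a + (p + b) / 20 ->
  dF + 2 * eta * e' ^+ 2 <= 2 * eta * e ^+ 2 - eta * p ^+ 2 / 2.
Proof.
move=> et0 p0 e0 a0 b0 e'0 ha hb hF he.
have K := key_ineq p0 e0 a0 b0 e'0 ha hb (lexx _) he.
have : eta * (- p ^+ 2 + p * b + (p + b) ^+ 2 / 20 + 2 * e' ^+ 2)
   <= eta * (2 * e ^+ 2 - p ^+ 2 / 2) by apply: ler_wpM2l => //; exact: ltW.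
set A := - p ^+ 2 + p * b + (p + b) ^+ 2 / 20.
set E1 := e' ^+ 2. set E2 := e ^+ 2. set P2 := p ^+ 2.
move: hF; rewrite -/A => hF; nra.
Qed.

Lemma tele (R : realType) (Phi q : nat -> R) :
  (forall s, Phi s.+1 <= Phi s - q s) ->
  forall N, \sum_(s < N) q s <= Phi 0%N - Phi N.
Proof.
move=> H; elim => [|N IH]; first by rewrite big_ord0 subrr.
rewrite big_ord_recr /=; have := H N; lra.
Qed.

Theorem theorem1 :
  exists C : nat, (0 < C)%N /\
  forall (R : realType) (d n : nat) (L : R)
    (f : nat -> 'rV[R]_d -> R) (g : nat -> 'rV[R]_d -> 'rV[R]_d)
    (pi : nat -> nat -> nat) (x0 : 'rV[R]_d),
    (0 < n)%N -> 0 < L ->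
    (forall i, (i < n)%N -> is_gradient (f i) (g i)) ->
    (forall i, (i < n)%N -> forall x y : 'rV[R]_d,
        enorm (g i x - g i y) <= L * enorm (x - y)) ->
    (exists m : R, forall x, m <= favg n f x) ->
    (forall s, perm_eq [seq pi s t | t <- iota 0 n] (iota 0 n)) ->
    let gamma := (20 * L * n%:R)^-1 in
    let fstar := inf (range (favg n f)) in
    forall (eps : R) (S : nat), 0 < eps -> (1 <= S)%N ->
      C%:R * L * (favg n f x0 - fstar) / eps ^+ 2 <= S%:R ->
      S%:R^-1 * \sum_(1 <= s < S.+1)
          enorm (gavg n g (nfg_omega n g gamma pi x0 s)) ^+ 2
        <= eps ^+ 2.
Proof.
exists 100%N; split => //.
move=> R d n L f g pi x0 n0 L0 Hg HL [m Hm] Hp gamma fstar eps S eps0 S1 HS.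
set F := favg n f in Hm HS *.
set G := gavg n g.
have L0' : 0 <= L := ltW L0.
have npos : (0 : R) < n%:R by rewrite ltr0n.
have nz : (n%:R : R) != 0 by rewrite gt_eqF.
have Lnz : L != 0 by rewrite gt_eqF.
have g0 : 0 <= gamma by rewrite /gamma invr_ge0 !mulr_ge0 // ltW.
have hgL : L * (gamma * n%:R) = 20^-1 by rewrite /gamma; field; rewrite Lnz nz.
set eta := gamma * n%:R in hgL.
have etaE : eta = (20 * L)^-1 by rewrite /eta /gamma; field; rewrite Lnz nz.
have eta0 : 0 < eta by rewrite etaE invr_gt0 mulr_gt0.
have Hdesc := descentF n0 L0' Hg HL.
have HlipG := lipG n0 HL.
have Hinf : forall x, fstar <= F x.
  move=> x; apply: ge_inf; last by exists x.
  by exists m => _ [y _ <-].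
pose om s := (nfg_state n g gamma pi x0 s).1.
pose vv s := (nfg_state n g gamma pi x0 s).2.
have stepE : forall s, om s.+1 = xin g gamma pi s (om s) (vv s) n /\
    vv s.+1 = (nfg_inner g gamma pi s (om s) (om s) (vv s) n).2.
  move=> s; rewrite /om /vv /=.
  by case: (nfg_state n g gamma pi x0 s) => o v.
pose p s := enorm (G (om s)).
pose e s := enorm (vv s - G (om s)).
pose Phi s := F (om s) + 2 * eta * e s ^+ 2.
have step : forall s, Phi s.+1 <= Phi s - eta * p s ^+ 2 / 2.
  move=> s; have [Eo Ev] := stepE s.
  have ha := epoch_a (om s) (vv s) n0 L0 g0 hgL HL (Hp s).
  have hx := epoch_x g gamma (om s) (vv s) n0 (Hp s).
  rewrite -Ev -Eo -/G in ha hx.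
  set o := om s in ha hx *; set v := vv s in ha hx *.
  set o' := om s.+1 in hx *; set v' := vv s.+1 in ha hx *.
  set aV := v' - G o in ha hx.
  set bV := aV + (v - G o).
  have hab : aV + v = G o + bV by apply/rowP => j; rewrite !mxE; ring.
  rewrite hab in hx.
  have hv : enorm v <= p s + e s.
    have -> : v = G o + (v - G o) by apply/rowP => j; rewrite !mxE; ring.
    exact: enormD.
  have hb : enorm bV <= enorm aV + e s by exact: enormD.
  have hdo : o' - o = - (eta *: (G o + bV)) by rewrite hx; apply/rowP => j; rewrite !mxE; ring.
  have hno : enorm (o' - o) <= eta * (p s + enorm bV).
    rewrite hdo enormN enormZ (ger0_norm (ltW eta0)).
    by apply: ler_wpM2l; [exact: ltW | exact: enormD].
  have hF : F o' - F o <= eta * (- p s ^+ 2 + p s * enorm bV + (p s + enorm bV) ^+ 2 / 20).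
    have D1 := Hdesc o o'.
    rewrite hdo dotvNr dotvZr dotvDr -enorm_sq -/(p s) in D1.
    have D2 := dotv_ge (G o) bV; rewrite -/(p s) in D2.
    have D3 : enorm (- (eta *: (G o + bV))) ^+ 2 <= (eta * (p s + enorm bV)) ^+ 2.
      rewrite -hdo ler_sqr ?nnegrE ?enorm_ge0 //.
      by rewrite mulr_ge0 ?addr_ge0 ?enorm_ge0 // ltW.
    have D4 : L * (eta * (p s + enorm bV)) ^+ 2 = eta * ((p s + enorm bV) ^+ 2 / 20).
      by rewrite -hgL; field.
    have D5 : L * enorm (- (eta *: (G o + bV))) ^+ 2 <= L * (eta * (p s + enorm bV)) ^+ 2.
      by apply: ler_wpM2l.
    rewrite D4 in D5.
    have D6 : eta * dotv (G o) bV >= eta * (- (p s * enorm bV))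
      by apply: ler_wpM2l => //; exact: ltW.
    set P := p s in D1 D2 D5 D6 *; set B := enorm bV in D1 D2 D5 D6 *.
    set Q := dotv (G o) bV in D1 D2 D6.
    set Z := enorm (- (eta *: (G o + bV))) ^+ 2 in D1 D5.
    set W := (P + B) ^+ 2 / 20 in D5 *.
    rewrite /F; nra.
  have he : e s.+1 <= enorm aV + (p s + enorm bV) / 20.
    rewrite /e -/o' -/v'.
    have -> : v' - G o' = aV + (G o - G o') by apply/rowP => j; rewrite !mxE; ring.
    apply: le_trans (enormD _ _) _; rewrite lerD2l.
    apply: le_trans (HlipG _ _) _.
    rewrite -enormN opprB.
    apply: le_trans (ler_wpM2l L0' hno) _.
    rewrite mulrA hgL; lra.
  have K := key_ineq2 eta0 (enorm_ge0 (G o)) (enorm_ge0 (v - G o)) (enorm_ge0 aV)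
    (enorm_ge0 bV) (enorm_ge0 (v' - G o')) _ hb hF he.
  rewrite /Phi -/o -/o'.
  have : enorm aV <= (p s + e s) / 10 by lra.
  move=> /K; rewrite -/(p s) -/(e s) /e -/o' -/v'; lra.
have T := tele step (S.+1).
have PhiN : forall N, fstar <= Phi N.
  move=> N; rewrite /Phi; have := Hinf (om N).
  have : 0 <= 2 * eta * e N ^+ 2 by apply: mulr_ge0; [apply: mulr_ge0 => //; exact: ltW | exact: sqr_ge0].
  lra.
have hp0 : p 0%N ^+ 2 <= 4 * L * (F x0 - fstar).
  have D := Hdesc x0 (x0 - (2 * L)^-1 *: G x0).
  have E : x0 - (2 * L)^-1 *: G x0 - x0 = - ((2 * L)^-1 *: G x0)
    by apply/rowP => j; rewrite !mxE; ring.
  have c0 : 0 < (2 * L)^-1 by rewrite invr_gt0 mulr_gt0.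
  rewrite E dotvNr dotvZr -enorm_sq enormN [enorm ((2 * L)^-1 *: _)]enormZ (ger0_norm (ltW c0)) in D.
  have D2 := Hinf (x0 - (2 * L)^-1 *: G x0).
  have -> : p 0%N = enorm (G x0) by [].
  set c := (2 * L)^-1 in D c0.
  have Lc : L * (c * enorm (G x0)) ^+ 2 = c * enorm (G x0) ^+ 2 / 2.
    by rewrite /c; field.
  rewrite Lc in D.
  have -> : 4 * L = 2 / c by rewrite /c; field.
  set P := enorm (G x0) ^+ 2 in D *.
  rewrite -/F in D D2.
  have : c * P <= 2 * (F x0 - fstar) by lra.
  rewrite mulrC -ler_pdivlMr //. 
  by rewrite mulrAC.
have Phi0 : Phi 0%N = F x0 + 2 * eta * p 0%N ^+ 2.
  by rewrite /Phi /e /p /vv /om /= sub0r enormN.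
have HP := PhiN S.+1.
have E2 : \sum_(s < S.+1) eta * p s ^+ 2 / 2
    = eta / 2 * (p 0%N ^+ 2 + \sum_(1 <= s < S.+1) p s ^+ 2).
  rewrite -(big_mkord xpredT (fun s => eta * p s ^+ 2 / 2)) big_ltn //.
  rewrite mulrDr mulr_sumr; congr (_ + _); first by rewrite mulrAC mulrC.
  by apply: eq_bigr => i _; rewrite mulrAC mulrC.
rewrite E2 Phi0 in T.
set Q := \sum_(1 <= s < S.+1) p s ^+ 2 in T.
have Q0 : 0 <= Q by apply: sumr_ge0 => i _; apply: sqr_ge0.
have D0 : 0 <= F x0 - fstar by have := Hinf x0; lra.
have hp0' : 2 * eta * p 0%N ^+ 2 <= 2 * eta * (4 * L * (F x0 - fstar)).
  by apply: ler_wpM2l => //; apply: mulr_ge0 => //; exact: ltW.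
have H8 : 2 * eta * (4 * L * (F x0 - fstar)) = 2 / 5 * (F x0 - fstar).
  by rewrite etaE; field.
have H1 : eta / 2 * Q <= 7 / 5 * (F x0 - fstar).
  have := sqr_ge0 (p 0%N); have := ltW eta0; set P0 := p 0%N ^+ 2 in T hp0' *.
  move=> et0 P00; have : 0 <= eta / 2 * P0 by apply: mulr_ge0 => //; apply: divr_ge0.
  rewrite mulrDr in T; lra.
have H2 : Q <= 56 * L * (F x0 - fstar).
  have := ler_wpM2l L0' H1.
  have -> : L * (eta / 2 * Q) = Q / 40 by rewrite etaE; field.
  lra.
change (S%:R^-1 * Q <= eps ^+ 2).
have Spos : (0 : R) < S%:R by rewrite ltr0n.
have e2 : 0 < eps ^+ 2 by rewrite exprn_gt0.
rewrite ler_pdivrMr // in HS.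
rewrite mulrC ler_pdivrMr //.
have LD : 0 <= L * (F x0 - fstar) by apply: mulr_ge0.
rewrite [eps ^+ 2 * _]mulrC; move: HS H2 LD; rewrite -!mulrA; set LD := L * (F x0 - fstar); set SE := S%:R * eps ^+ 2; lra.
Qed.
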